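(* Let $\Lambda$ be a row-finite strongly aperiodic $k$-graph with no sources, and define $\beta$ on $\Lambda^\infty$ by $\beta(x)=\{v\in\Lambda^0: v\Lambda x(n,n)\neq\emptyset \text{ for some } n\in\mathbb{N}^k\}$. Then: (A) for every $x\in\Lambda^\infty$, $\beta(x)$ is a maximal tail; (B) $\beta:\Lambda^\infty\to\chi_\Lambda$ is a continuous, open surjection, and $\chi_\Lambda$ is a quotient space of $\Lambda^\infty$; (C) for every $v\in\Lambda^0$, the open set $S(v)=\{\chi\in\chi_\Lambda: v\in\chi\}$ is a compact subset of $\chi_\Lambda$.
   Context: A $k$-graph is a countable category $\Lambda$ with a functor $d:\Lambda\to\mathbb{N}^k$ satisfying the factorization property: whenever $d(\lambda)=m+n$ there are unique $\mu,\nu$ with $\lambda=\mu\nu$, $d(\mu)=m$, $d(\nu)=n$. $\Lambda^n=d^{-1}(n)$, $\Lambda^0$ the vertices, $r,s$ range and source, $v\Lambda^n=\{\lambda:r(\lambda)=v,d(\lambda)=n\}$, $v\Lambda w=\{\lambda:r(\lambda)=v,s(\lambda)=w\}$. Row-finite: each $v\Lambda^n$ finite; no sources: $v\Lambda^{e_i}\neq\emptyset$ for all $v,i$. For $0\le m\le n\le d(\lambda)$, $\lambda(m,n)$ is the unique path with $\lambda=\lambda'\lambda(m,n)\lambda''$, $d(\lambda')=m$, $d(\lambda(m,n))=n-m$. $v\le w$ means $v\Lambda w\ne\emptyset$; $H\subseteq\Lambda^0$ is hereditary if $v\in H$, $v\le w$ imply $w\in H$; saturated if for every $v$: $r^{-1}(v)\ne\emptyset$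 and $\{s(\lambda):\lambda\in v\Lambda^{e_i}\}\subseteq H$ for some $i$ imply $v\in H$. For saturated hereditary $H\subsetneq\Lambda^0$, $\Gamma(\Lambda\setminus H)$ is the $k$-graph with vertices $\Lambda^0\setminus H$ and morphisms $\{\lambda:s(\lambda)\notin H\}$. No local periodicity at $v$: for each $m\ne n\in\mathbb{N}^k$ there is $\lambda\in v\Lambda$ with $d(\lambda)\ge m\vee n$ and $\lambda(m,m+d(\lambda)-(m\vee n))\ne\lambda(n,n+d(\lambda)-(m\vee n))$; aperiodic: no local periodicity at every vertex; strongly aperiodic: every $\Gamma(\Lambda\setminus H)$ ($H\subsetneq\Lambda^0$ saturated hereditary) aperiodic. $\Omega_k$ is the $k$-graph with objects $\mathbb{N}^k$, morphisms $\{(m,n): m\le n\}$, $r(m,n)=m$, $s(m,n)=n$, $(m,n)(n,p)=(m,p)$, $d(m,n)=n-m$. The infinite path space $\Lambda^\infty$ is the set of degree-preserving functors $x:\Omega_k\to\Lambda$, with the topology having basis the sets $Z(\lambda)=\{x: x(0,d(\lambda))=\lambda\}$, $\lambda\in\Lambda$. A nonempty $\gamma\subseteq\Lambda^0$ is a maximal tail if (a) for all $v_1,v_2\in\gamma$ there is $w\in\gamma$ with $v_1\Lambda w\ne\emptyset$, $v_2\Lambda w\ne\emptyset$; (b) for every $v\in\gamma$ and $1\le i\le k$ there is $e\in v\Lambda^{e_i}$ with $s(e)\in\gamma$; (c) if $w\in\gamma$ and $v\Lambda w\ne\emptyset$ then $v\in\gamma$. $\chi_\Lambda$ is the set of maximal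 tails, topologized so that the closure of $S\subseteq\chi_\Lambda$ is $\{\delta\in\chi_\Lambda:\delta\subseteq\bigcup_{\gamma\in S}\gamma\}$; equivalently, the topology with base $\{S(v):v\in\Lambda^0\}$ where $S(v)=\{\chi\in\chi_\Lambda:v\in\chi\}$. *)

(* Defs.v *)
From Stdlib Require List.
From mathcomp Require Import all_boot.

Set Implicit Arguments.
Unset Strict Implicit.
Unset Printing Implicit Defensive.

Definition Nk (k : nat) := {ffun 'I_k -> nat}.
Definition zeroN (k : nat) : Nk k := [ffun _ => 0].
Definition addN (k : nat) (m n : Nk k) : Nk k := [ffun i => m i + n i].
Definition subN (k : nat) (m n : Nk k) : Nk k := [ffun i => m i - n i].
Definition joinN (k : nat) (m n : Nk k) : Nk k := [ffun i => maxn (m i) (n i)].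
Definition leN (k : nat) (m n : Nk k) : Prop := forall i, m i <= n i.
Definition unitN (k : nat) (i : 'I_k) : Nk k := [ffun j => nat_of_bool (j == i)].

(* A countable category (objects [vert], morphisms [path], composition [comp]
   meaningful on composable pairs), with a functor [deg] to N^k satisfying the
   unique factorization property.  Vertices Lambda^0 = deg^-1(0) are identified
   with the objects via [idp]. *)
Record kgraph (k : nat) : Type := KGraph {
  vert : Type;
  path : Type;
  vert_countable : exists f : vert -> nat, injective f;
  path_countable : exists f : path -> nat, injective f;
  rng : path -> vert;
  src : path -> vert;
  idp : vert -> path;
  comp : path -> path -> path;
  deg : path -> Nk k;
  rng_idp : forall v, rng (idp v) = v;
  src_idp : forall v, src (idp v) = v;
  rng_comp : forall mu nu, src mu = rng nu -> rng (comp mu nu) = rng mu;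
  src_comp : forall mu nu, src mu = rng nu -> src (comp mu nu) = src nu;
  comp_idl : forall mu, comp (idp (rng mu)) mu = mu;
  comp_idr : forall mu, comp mu (idp (src mu)) = mu;
  comp_assoc : forall a b c, src a = rng b -> src b = rng c ->
    comp a (comp b c) = comp (comp a b) c;
  deg_idp : forall v, deg (idp v) = zeroN k;
  deg_comp : forall mu nu, src mu = rng nu ->
    deg (comp mu nu) = addN (deg mu) (deg nu);
  factorization : forall lam (m n : Nk k), deg lam = addN m n ->
    exists mu nu,
      (src mu = rng nu /\ lam = comp mu nu /\ deg mu = m /\ deg nu = n) /\
      (forall mu' nu', src mu' = rng nu' -> lam = comp mu' nu' ->
         deg mu' = m -> deg nu' = n -> mu' = mu /\ nu' = nu)
}.

Arguments vert {k} _.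
Arguments path {k} _.
Arguments rng {k _} _.
Arguments src {k _} _.
Arguments idp {k _} _.
Arguments comp {k _} _ _.
Arguments deg {k _} _.

Section KGraphNotions.
Variables (k : nat) (L : kgraph k).

Definition vle (v w : vert L) : Prop := exists lam : path L, rng lam = v /\ src lam = w.

Definition row_finite : Prop :=
  forall (v : vert L) (n : Nk k),
    exists s : seq (path L), forall lam, rng lam = v -> deg lam = n -> List.In lam s.

Definition no_sources : Prop :=
  forall (v : vert L) (i : 'I_k), exists lam : path L, rng lam = v /\ deg lam = unitN i.

(* [segment lam m n sigma] : sigma = lam(m,n), i.e. lam = lam' sigma lam''
   with d(lam') = m and d(sigma) = n - m. *)
Definition segment (lam : path L) (m n : Nk k) (sigma : path L) : Prop :=
  exists lam' lam'' : path L,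
    src lam' = rng sigma /\ src sigma = rng lam'' /\
    lam = comp (comp lam' sigma) lam'' /\
    deg lam' = m /\ deg sigma = subN n m.

(* No local periodicity at v in the subgraph of paths whose source satisfies
   [C] (C = everything: Lambda itself; C = complement of H: Gamma(Lambda\H)). *)
Definition no_local_periodicity_in (C : vert L -> Prop) (v : vert L) : Prop :=
  forall m n : Nk k, m <> n ->
    exists lam : path L,
      rng lam = v /\ C (src lam) /\ leN (joinN m n) (deg lam) /\
      forall sigma tau,
        segment lam m (addN m (subN (deg lam) (joinN m n))) sigma ->
        segment lam n (addN n (subN (deg lam) (joinN m n))) tau ->
        sigma <> tau.

Definition aperiodic : Prop :=
  forall v : vert L, no_local_periodicity_in (fun _ => True) v.

Definition hereditary (H : vert L -> Prop) : Prop :=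
  forall v w, H v -> vle v w -> H w.

Definition saturated (H : vert L -> Prop) : Prop :=
  forall v : vert L,
    (exists lam : path L, rng lam = v) ->
    (exists i : 'I_k, forall lam : path L,
        rng lam = v -> deg lam = unitN i -> H (src lam)) ->
    H v.

(* Gamma(Lambda \ H) has vertices outside H and paths with source outside H;
   its aperiodicity is no local periodicity (within it) at each vertex v
   outside H. *)
Definition Gamma_aperiodic (H : vert L -> Prop) : Prop :=
  forall v : vert L, ~ H v -> no_local_periodicity_in (fun w => ~ H w) v.

Definition strongly_aperiodic : Prop :=
  forall H : vert L -> Prop,
    saturated H -> hereditary H -> (exists v, ~ H v) -> Gamma_aperiodic H.

(* ---------- infinite paths: degree-preserving functors Omega_k -> Lambda ----
   [xo] is the object map, [xm m n] the image of the morphism (m,n) (only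
   meaningful for m <= n). *)
Record infpath : Type := InfPath {
  xo : Nk k -> vert L;
  xm : Nk k -> Nk k -> path L;
  xm_rng : forall m n, leN m n -> rng (xm m n) = xo m;
  xm_src : forall m n, leN m n -> src (xm m n) = xo n;
  xm_deg : forall m n, leN m n -> deg (xm m n) = subN n m;
  xm_id : forall m, xm m m = idp (xo m);
  xm_comp : forall m n p, leN m n -> leN n p -> xm m p = comp (xm m n) (xm n p)
}.

Definition Zcyl (lam : path L) (x : infpath) : Prop :=
  xm x (zeroN k) (deg lam) = lam.

Definition open_inf (W : infpath -> Prop) : Prop :=
  forall x, W x -> exists lam, Zcyl lam x /\ forall y, Zcyl lam y -> W y.

Definition maximal_tail (g : vert L -> Prop) : Prop :=
  (exists v, g v) /\
  (forall v1 v2, g v1 -> g v2 -> exists w, g w /\ vle v1 w /\ vle v2 w) /\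
  (forall v, g v -> forall i : 'I_k,
      exists e : path L, rng e = v /\ deg e = unitN i /\ g (src e)) /\
  (forall v w, g w -> vle v w -> g v).

(* Subsets of chi_Lambda are predicates on vertex sets, read on maximal tails
   only.  S(v) = { chi | v in chi }. *)
Definition Sv (v : vert L) (g : vert L -> Prop) : Prop := maximal_tail g /\ g v.

Definition open_chi (U : (vert L -> Prop) -> Prop) : Prop :=
  forall g, maximal_tail g -> U g ->
    exists v, g v /\ forall g', maximal_tail g' -> g' v -> U g'.

Definition compact_chi (K : (vert L -> Prop) -> Prop) : Prop :=
  forall (I : Type) (F : I -> (vert L -> Prop) -> Prop),
    (forall i, open_chi (F i)) ->
    (forall g, maximal_tail g -> K g -> exists i, F i g) ->
    exists s : seq I, forall g, maximal_tail g -> K g ->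
      exists i, List.In i s /\ F i g.

Definition beta (x : infpath) : vert L -> Prop :=
  fun v => exists n : Nk k, vle v (xo x n).

End KGraphNotions.

Arguments infpath {k} _.

(* Main.v *)
From Pilot Require Import Defs.
From mathcomp Require Import all_boot.
From Stdlib Require Import Classical ClassicalEpsilon FunctionalExtensionality PropExtensionality.
Import Pilot.Defs.

Set Implicit Arguments.
Unset Strict Implicit.
Unset Printing Implicit Defensive.

Lemma addN_subN k (m n : Nk k) : leN m n -> addN m (subN n m) = n.
Proof. by move=> h; apply/ffunP => i; rewrite !ffunE subnKC. Qed.

Lemma addNI k (a b c : Nk k) : addN a b = addN a c -> b = c.
Proof.
move=> h; apply/ffunP => i; have := congr1 (fun f : Nk k => f i) h.
by rewrite !ffunE => /eqP; rewrite eqn_add2l => /eqP.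
Qed.

Lemma add0N k (n : Nk k) : addN (zeroN k) n = n.
Proof. by apply/ffunP => i; rewrite !ffunE. Qed.

Lemma subN_addN k (m d : Nk k) : subN (addN m d) m = d.
Proof. by apply/ffunP => i; rewrite !ffunE addKn. Qed.

Lemma leN0 k (n : Nk k) : leN (zeroN k) n.
Proof. by move=> i; rewrite ffunE. Qed.

Lemma leN_refl k (n : Nk k) : leN n n.
Proof. by move=> i. Qed.

Lemma leN_trans k (a b c : Nk k) : leN a b -> leN b c -> leN a c.
Proof. by move=> h1 h2 i; apply: leq_trans (h1 i) (h2 i). Qed.

Lemma leN_add k (a b : Nk k) : leN a (addN a b).
Proof. by move=> i; rewrite ffunE leq_addr. Qed.


Lemma deg0_idp k (L : kgraph k) (s : path L) : deg s = zeroN k -> s = idp (rng s).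
Proof.
move=> h.
have hd : deg s = addN (zeroN k) (zeroN k) by rewrite h add0N.
have [mu [nu [[h1 [h2 [h3 h4]]] hu]]] := factorization hd.
have [a1 a2] := hu (idp (rng s)) s (src_idp _) (esym (comp_idl s)) (deg_idp _) h.
have [b1 b2] := hu s (idp (src s)) (esym (rng_idp _)) (esym (comp_idr s)) h (deg_idp _).
by rewrite a1 b1.
Qed.

Lemma fact_unique k (L : kgraph k) (mu nu mu' nu' : path L) :
  src mu = rng nu -> src mu' = rng nu' -> comp mu nu = comp mu' nu' ->
  deg mu = deg mu' -> mu = mu' /\ nu = nu'.
Proof.
move=> h1 h2 he hd.
have d1 := deg_comp h1. have d2 := deg_comp h2.
have hnu : deg nu = deg nu'.
  by apply: (@addNI _ (deg mu)); rewrite -d1 he d2 hd.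
have [a [b [_ hu]]] := factorization d1.
have [e1 e2] := hu mu nu h1 erefl erefl erefl.
have [e3 e4] := hu mu' nu' h2 he (esym hd) (esym hnu).
by rewrite e1 e2 e3 e4.
Qed.

Lemma vle_refl k (L : kgraph k) (v : vert L) : vle v v.
Proof. by exists (idp v); rewrite rng_idp src_idp. Qed.

Lemma vle_trans k (L : kgraph k) (u v w : vert L) : vle u v -> vle v w -> vle u w.
Proof.
move=> [a [ha1 ha2]] [b [hb1 hb2]].
have h : src a = rng b by rewrite ha2 hb1.
by exists (comp a b); rewrite rng_comp // src_comp.
Qed.

Lemma split_exists k (L : kgraph k) (lam : path L) (n : Nk k) :
  leN n (deg lam) -> exists mu nu, src mu = rng nu /\ lam = comp mu nu /\ deg mu = n.
Proof.
move=> h.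
have hd : deg lam = addN n (subN (deg lam) n) by rewrite addN_subN.
have [mu [nu [[h1 [h2 [h3 h4]]] _]]] := factorization hd.
by exists mu, nu.
Qed.

Lemma edge_from_path k (L : kgraph k) (s : path L) (i : 'I_k) :
  0 < deg s i -> exists e r : path L,
    rng e = rng s /\ deg e = unitN i /\ src e = rng r /\ src r = src s.
Proof.
move=> h.
have hle : leN (unitN i) (deg s).
  by move=> j; rewrite ffunE; case: eqP => [->|] //.
have [e [r [h1 [h2 h3]]]] := split_exists hle.
exists e, r; split; first by rewrite h2 rng_comp.
by split=> //; split=> //; rewrite h2 src_comp.
Qed.

From mathcomp Require Import zify.

Lemma subN0 k (n : Nk k) : subN n (zeroN k) = n.
Proof. by apply/ffunP => i; rewrite !ffunE subn0. Qed.

Lemma vle_xo k (L : kgraph k) (x : infpath L) (m n : Nk k) :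
  leN m n -> vle (xo x m) (xo x n).
Proof. by move=> h; exists (xm x m n); rewrite xm_rng // xm_src. Qed.

Lemma beta_tail k (L : kgraph k) (x : infpath L) : maximal_tail (beta x).
Proof.
split; first by exists (xo x (zeroN k)), (zeroN k); apply: vle_refl.
split.
  move=> v1 v2 [n1 h1] [n2 h2]; exists (xo x (joinN n1 n2)).
  split; first by exists (joinN n1 n2); apply: vle_refl.
  split.
    by apply: vle_trans h1 _; apply: vle_xo => i; rewrite ffunE leq_maxl.
  by apply: vle_trans h2 _; apply: vle_xo => i; rewrite ffunE leq_maxr.
split.
  move=> v [n [mu [h1 h2]]] i.
  pose p := addN n (unitN i).
  have hnp : leN n p := @leN_add _ _ _.
  have hs : src mu = rng (xm x n p) by rewrite xm_rng.
  have hpos : 0 < deg (comp mu (xm x n p)) i.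
    rewrite deg_comp // xm_deg // /p !ffunE eqxx; lia.
  have [e [r [e1 [e2 [e3 e4]]]]] := edge_from_path hpos.
  exists e; split; first by rewrite e1 rng_comp.
  split=> //; exists p; exists r; split=> //.
  by rewrite e4 src_comp // xm_src.
move=> v w [n h] hv; exists n; exact: vle_trans hv h.
Qed.

Lemma beta_cont k (L : kgraph k) (U : (vert L -> Prop) -> Prop) :
  open_chi U -> open_inf (fun x : infpath L => U (beta x)).
Proof.
move=> hU x hx.
have [v [[n hv] hall]] := hU _ (beta_tail x) hx.
have hd : deg (xm x (zeroN k) n) = n by rewrite xm_deg ?subN0 //; apply: leN0.
exists (xm x (zeroN k) n); split; first by rewrite /Zcyl hd.
move=> y; rewrite /Zcyl hd => hy.
apply: hall; first exact: beta_tail.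
exists n.
have -> : xo y n = xo x n.
  by rewrite -(xm_src y (leN0 n)) hy xm_src //; apply: leN0.
exact: hv.
Qed.

Definition degs k (s : seq 'I_k) : Nk k :=
  foldr (fun i acc => addN (unitN i) acc) (zeroN k) s.

Lemma degs_count k (s : seq 'I_k) i : degs s i = count_mem i s.
Proof.
elim: s => [|j s IH] /=; first by rewrite ffunE.
by rewrite !ffunE IH eq_sym.
Qed.

Lemma degs_enum k (i : 'I_k) : degs (enum 'I_k) i = 1.
Proof. by rewrite degs_count count_uniq_mem ?enum_uniq // mem_enum. Qed.

Lemma path_list k (L : kgraph k) (Q : vert L -> Prop) :
  (forall u, Q u -> forall i, exists e : path L, rng e = u /\ deg e = unitN i /\ Q (src e)) ->
  forall s u, Q u -> exists p : path L, rng p = u /\ deg p = degs s /\ Q (src p).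
Proof.
move=> hQ; elim=> [|i s IH] u hu.
  by exists (idp u); rewrite rng_idp deg_idp src_idp.
have [e [e1 [e2 e3]]] := hQ u hu i.
have [p [p1 [p2 p3]]] := IH _ e3.
have h : src e = rng p by [].
exists (comp e p); rewrite rng_comp // deg_comp // src_comp // e2 p2.
by [].
Qed.

Lemma Sv_compact k (L : kgraph k) (v : vert L) : row_finite L -> compact_chi (Sv v).
Proof.
move=> hrf I F hF hcov.
pose cov (u : vert L) := exists s : seq I, forall g, maximal_tail g -> g u ->
  exists i, List.In i s /\ F i g.
suff [s hs] : cov v by exists s => g hg [_ hgv]; exact: hs.
apply: NNPP => hbad.
have step : forall u, ~ cov u -> forall i,
    exists e : path L, rng e = u /\ deg e = unitN i /\ ~ cov (src e).
  move=> u hu i; apply: NNPP => hne; apply: hu.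
  have [ls hls] := hrf u (unitN i).
  have [s hs] : exists s : seq I, forall e, List.In e ls -> rng e = u -> deg e = unitN i ->
      forall g, maximal_tail g -> g (src e) -> exists j, List.In j s /\ F j g.
    elim: ls {hls} => [|e ls [s IH]]; first by exists nil.
    have [he|he] := classic (rng e = u /\ deg e = unitN i).
      have [s' hs'] : cov (src e).
        apply: NNPP => hc; apply: hne; exists e; by case: he.
      exists (s' ++ s) => e' [<-|he'] h1 h2 g hg hge.
        have [j [hj1 hj2]] := hs' g hg hge; exists j; split=> //.
        by apply: List.in_or_app; left.
      have [j [hj1 hj2]] := IH e' he' h1 h2 g hg hge; exists j; split=> //.
      by apply: List.in_or_app; right.
    exists s => e' [<-|he'] h1 h2; first by case: he.
    exact: IH.
  exists s => g hg hgu.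
  have [_ [_ [hb _]]] := hg.
  have [e [h1 [h2 h3]]] := hb u hgu i.
  exact: hs e (hls e h1 h2) h1 h2 g hg h3.
have hpl := path_list step (enum 'I_k).
pose P u u' := exists p : path L, rng p = u /\ src p = u' /\
  deg p = degs (enum 'I_k) /\ ~ cov u'.
pose nxt u := epsilon (inhabits v) (P u).
have hnxt : forall u, ~ cov u -> P u (nxt u).
  move=> u hu; apply: epsilon_spec.
  have [p [p1 [p2 p3]]] := hpl u hu.
  by exists (src p), p.
pose us n := iter n nxt v.
have hbadn : forall n, ~ cov (us n).
  elim=> [|n IH] //=.
  by have [p [_ [_ [_ ?]]]] := hnxt _ IH.
have hch1 : forall n, vle (us n) (us n.+1).
  move=> n; have [p [p1 [p2 _]]] := hnxt _ (hbadn n).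
  by exists p.
have hch : forall n m, vle (us n) (us (n + m)).
  move=> n; elim=> [|m IH]; first by rewrite addn0; apply: vle_refl.
  by rewrite addnS; apply: vle_trans IH (hch1 _).
pose T w := exists n, vle w (us n).
have hT : maximal_tail T.
  split; first by exists v, 0; apply: vle_refl.
  split.
    move=> w1 w2 [a h1] [b h2]; exists (us (a + b)); split.
      by exists (a + b); apply: vle_refl.
    split; first by apply: vle_trans h1 (hch a b).
    by rewrite addnC; apply: vle_trans h2 (hch b a).
  split.
    move=> w [n [mu [m1 m2]]] i.
    have [p [p1 [p2 [p3 _]]]] := hnxt _ (hbadn n).
    have hs : src mu = rng p by rewrite m2 p1.
    have hpos : 0 < deg (comp mu p) i.
      by rewrite deg_comp // ffunE p3 degs_enum addn1.
    have [e [r [e1 [e2 [e3 e4]]]]] := edge_from_path hpos.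
    exists e; split; first by rewrite e1 rng_comp.
    split=> //; exists n.+1; exists r; split=> //.
    by rewrite e4 src_comp // p2.
  move=> a b [n h] hab; exists n; exact: vle_trans hab h.
have [i hi] := hcov T hT (conj hT (ex_intro _ 0 (vle_refl v))).
have [w [[n hw] hall]] := hF i T hT hi.
apply: (hbadn n); exists [:: i] => g hg hgu.
exists i; split; first by left.
apply: hall => //.
by have [_ [_ [_ hc]]] := hg; exact: hc _ _ hgu hw.
Qed.

Definition sp k (L : kgraph k) (lam : path L) (n : Nk k) : path L * path L :=
  epsilon (inhabits (lam, lam))
    (fun p => src p.1 = rng p.2 /\ lam = comp p.1 p.2 /\ deg p.1 = n).

Lemma sp_spec k (L : kgraph k) (lam : path L) (n : Nk k) : leN n (deg lam) ->
  src (sp lam n).1 = rng (sp lam n).2 /\ lam = comp (sp lam n).1 (sp lam n).2 /\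
  deg (sp lam n).1 = n.
Proof.
move=> h; rewrite /sp.
apply: (epsilon_spec (inhabits (lam, lam)) (fun p : path L * path L =>
  src p.1 = rng p.2 /\ lam = comp p.1 p.2 /\ deg p.1 = n)).
by have [mu [nu hh]] := split_exists h; exists (mu, nu).
Qed.

Lemma sp_unique k (L : kgraph k) (mu nu : path L) :
  src mu = rng nu -> sp (comp mu nu) (deg mu) = (mu, nu).
Proof.
move=> h.
have hle : leN (deg mu) (deg (comp mu nu)) by rewrite deg_comp //; apply: leN_add.
have [a1 [a2 a3]] := sp_spec hle.
have [e1 e2] := fact_unique h a1 a2 (esym a3).
by move: e1 e2; case: (sp (comp mu nu) (deg mu)) => a b /= -> ->.
Qed.

Lemma sp_full k (L : kgraph k) (l : path L) : sp l (deg l) = (l, idp (src l)).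
Proof.
have := @sp_unique _ _ l (idp (src l)) (esym (rng_idp _)).
by rewrite comp_idr.
Qed.

Lemma sp_zero k (L : kgraph k) (l : path L) : sp l (zeroN k) = (idp (rng l), l).
Proof.
have := @sp_unique _ _ (idp (rng l)) l (src_idp _).
by rewrite comp_idl deg_idp.
Qed.

Lemma sp_ext k (L : kgraph k) (l r : path L) (n : Nk k) :
  leN n (deg l) -> src l = rng r -> (sp (comp l r) n).1 = (sp l n).1.
Proof.
move=> hn hr.
have [a1 [a2 a3]] := sp_spec hn.
set a := (sp l n).1 in a1 a2 a3 *; set b := (sp l n).2 in a1 a2 a3.
have hb : src b = rng r by rewrite -hr a2 src_comp.
have -> : comp l r = comp a (comp b r) by rewrite [in LHS]a2 comp_assoc.
have hab : src a = rng (comp b r) by rewrite rng_comp.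
by rewrite -a3 sp_unique.
Qed.

Lemma seq_exists k (L : kgraph k) (g : vert L -> Prop) (lam : path L) (f : vert L -> nat) :
  injective f -> maximal_tail g -> g (src lam) ->
  exists ls : nat -> path L, ls 0 = lam /\
    (forall j, g (src (ls j)) /\ (forall i, j <= deg (ls j) i)) /\
    (forall j, exists r, src (ls j) = rng r /\ ls j.+1 = comp (ls j) r /\
        (forall w, g w -> f w = j -> vle w (src r))).
Proof.
move=> finj hg hl.
have [_ [ha [hb hc]]] := hg.
have ext := path_list hb (enum 'I_k).
pose Q j (l l' : path L) := exists r, src l = rng r /\ l' = comp l r /\ g (src r) /\
   (forall i, 0 < deg r i) /\ (forall w, g w -> f w = j -> vle w (src r)).
have stepex : forall j l, g (src l) -> exists l', Q j l l'.
  move=> j l hgl.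
  have [[w [hw1 hw2]]|hno] := classic (exists w, g w /\ f w = j).
    have [w' [hw' [[mu [mu1 mu2]] hww']]] := ha _ _ hgl hw1.
    have [p [p1 [p2 p3]]] := ext _ hw'.
    have hmp : src mu = rng p by rewrite mu2 p1.
    exists (comp l (comp mu p)), (comp mu p).
    split; first by rewrite rng_comp.
    split=> //; split; first by rewrite src_comp.
    split; first by move=> i; rewrite deg_comp // ffunE p2 degs_enum addn1.
    move=> w0 hw0 hf; have e : w0 = w by apply: finj; rewrite hf hw2.
    rewrite e src_comp //; apply: vle_trans hww' _.
    by exists p.
  have [p [p1 [p2 p3]]] := ext _ hgl.
  exists (comp l p), p; split=> //; split=> //; split=> //.
  split; first by move=> i; rewrite p2 degs_enum.
  by move=> w hw hf; case: hno; exists w.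
pose nx j l := epsilon (inhabits l) (Q j l).
have hnx : forall j l, g (src l) -> Q j l (nx j l).
  by move=> j l h; apply: epsilon_spec; apply: stepex.
pose ls := nat_rect (fun _ => path L) lam (fun j l => nx j l).
have lsS : forall j, ls j.+1 = nx j (ls j) by [].
have inv : forall j, g (src (ls j)) /\ (forall i, j <= deg (ls j) i).
  elim=> [|j [IH1 IH2]]; first by split=> // i.
  rewrite lsS; have [r [r1 [r2 [r3 [r4 _]]]]] := hnx j _ IH1.
  rewrite r2 src_comp //; split=> // i.
  rewrite deg_comp // ffunE; have := IH2 i; have := r4 i; lia.
exists ls; split=> //; split=> // j.
have [r [r1 [r2 [_ [_ r5]]]]] := hnx j _ (inv j).1.
by exists r.
Qed.

Lemma key k (L : kgraph k) (g : vert L -> Prop) (lam : path L) :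
  maximal_tail g -> g (src lam) -> exists y : infpath L, Zcyl lam y /\ beta y = g.
Proof.
move=> hg hl.
have [f finj] := vert_countable L.
have [ls [ls0 [inv hstep]]] := seq_exists finj hg hl.
have nest : forall j m, exists r, src (ls j) = rng r /\ ls (j + m) = comp (ls j) r.
  move=> j; elim=> [|m [r [r1 r2]]].
    by exists (idp (src (ls j))); rewrite rng_idp addn0 comp_idr.
  have [r' [r'1 [r'2 _]]] := hstep (j + m).
  have hrr : src r = rng r' by rewrite -r'1 r2 src_comp.
  exists (comp r r'); rewrite rng_comp //; split=> //.
  by rewrite addnS r'2 r2 comp_assoc.
have lels : forall j j', j <= j' -> leN (deg (ls j)) (deg (ls j')).
  move=> j j' h; have [r [r1 r2]] := nest j (j' - j).
  by rewrite subnKC in r2 => //; rewrite r2 deg_comp //; apply: leN_add.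
pose J (n : Nk k) := \max_(i : 'I_k) n i.
have hJ : forall n j, J n <= j -> leN n (deg (ls j)).
  move=> n j h i; apply: leq_trans (leq_bigmax i) _.
  by apply: leq_trans h _; apply: (inv j).2.
pose P n := (sp (ls (J n)) n).1.
have hP : forall n j, leN n (deg (ls j)) -> P n = (sp (ls j) n).1.
  move=> n j hn; rewrite /P; case: (leqP (J n) j) => h.
    have [r [r1 r2]] := nest (J n) (j - J n).
    by rewrite subnKC in r2 => //; rewrite r2 sp_ext //; apply: hJ.
  have [r [r1 r2]] := nest j (J n - j).
  by rewrite subnKC in r2 => //; [rewrite r2 sp_ext | apply: ltnW].
have hdegP : forall n, deg (P n) = n.
  by move=> n; have [_ [_ ->]] := sp_spec (hJ n (J n) (leqnn _)).
have hP2 : forall m n, leN m n -> (sp (P n) m).1 = P m.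
  move=> m n hmn.
  have hn := hJ n (J n) (leqnn _).
  have [a1 [a2 a3]] := sp_spec hn.
  have hm : leN m (deg (sp (ls (J n)) n).1) by rewrite a3.
  have [c1 [c2 c3]] := sp_spec hm.
  rewrite (hP m (J n) (leN_trans hmn hn)) /P.
  set a := (sp (ls (J n)) n).1 in a1 a2 a3 hm c1 c2 c3 *.
  set b := (sp (ls (J n)) n).2 in a1 a2.
  set c := (sp a m).1 in c1 c2 c3 *.
  set d := (sp a m).2 in c1 c2.
  have hdb : src d = rng b by rewrite -a1 c2 src_comp.
  have e : ls (J n) = comp c (comp d b) by rewrite comp_assoc // -c2 -a2.
  have hcd : src c = rng (comp d b) by rewrite rng_comp.
  by rewrite e -c3 sp_unique.
pose xo0 n := src (P n).
pose xm0 m n := (sp (P n) m).2.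
have hdec : forall m n, leN m n -> src (P m) = rng (xm0 m n) /\ P n = comp (P m) (xm0 m n).
  move=> m n h; have hm : leN m (deg (P n)) by rewrite hdegP.
  have [c1 [c2 _]] := sp_spec hm.
  by rewrite -(hP2 m n h).
have hrng : forall m n, leN m n -> rng (xm0 m n) = xo0 m.
  by move=> m n h; have [h1 _] := hdec m n h; rewrite /xo0 h1.
have hsrc : forall m n, leN m n -> src (xm0 m n) = xo0 n.
  by move=> m n h; have [h1 h2] := hdec m n h; rewrite /xo0 h2 src_comp.
have hdeg : forall m n, leN m n -> deg (xm0 m n) = subN n m.
  move=> m n h; have [h1 h2] := hdec m n h.
  have := congr1 deg h2; rewrite deg_comp // !hdegP => e.
  by rewrite [in RHS]e subN_addN.
have hid : forall m, xm0 m m = idp (xo0 m).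
  move=> m; have hd := hdeg m m (leN_refl m).
  have hz : subN m m = zeroN k by apply/ffunP => i; rewrite !ffunE subnn.
  rewrite hz in hd.
  by rewrite (deg0_idp hd) hrng //; apply: leN_refl.
have hcomp : forall m n p, leN m n -> leN n p -> xm0 m p = comp (xm0 m n) (xm0 n p).
  move=> m n p hmn hnp.
  have [a1 a2] := hdec m p (leN_trans hmn hnp).
  have [b1 b2] := hdec n p hnp.
  have [c1 c2] := hdec m n hmn.
  have hmid : src (xm0 m n) = rng (xm0 n p) by rewrite hsrc // hrng.
  have e : comp (P m) (xm0 m p) = comp (P m) (comp (xm0 m n) (xm0 n p)).
    by rewrite -a2 b2 c2 comp_assoc.
  have hx : src (P m) = rng (comp (xm0 m n) (xm0 n p)) by rewrite rng_comp.
  by have [_ ->] := fact_unique a1 hx e erefl.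
pose y := @InfPath k L xo0 xm0 hrng hsrc hdeg hid hcomp.
exists y; split.
  rewrite /Zcyl /= /xm0.
  have h0 : leN (deg lam) (deg (ls 0)) by rewrite ls0; apply: leN_refl.
  by rewrite (hP _ 0 h0) ls0 sp_full /= sp_zero.
apply: functional_extensionality => w; apply: propositional_extensionality.
have [_ [_ [_ hc]]] := hg.
split.
  move=> [n /= hv]; apply: (hc w (xo0 n) _ hv).
  have hn := hJ n (J n) (leqnn _).
  have [a1 [a2 _]] := sp_spec hn.
  apply: (hc _ _ (inv (J n)).1).
  exists (sp (ls (J n)) n).2; split; first by rewrite -a1.
  by rewrite [in RHS]a2 src_comp.
move=> hw.
have [r [r1 [r2 r3]]] := hstep (f w).
have hv := r3 w hw erefl.
exists (deg (ls (f w).+1)) => /=.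
rewrite /xo0 (hP _ (f w).+1 (leN_refl _)) sp_full /= r2 src_comp //.
Qed.

Theorem proposition4p6 (k : nat) (L : kgraph k) :
  row_finite L -> strongly_aperiodic L -> no_sources L ->
  (* (A) *)
  (forall x : infpath L, maximal_tail (beta x)) /\
  (* (B) beta continuous, open, surjective; chi_Lambda a quotient of Lambda^infty *)
  ((forall U, open_chi U -> open_inf (fun x : infpath L => U (beta x))) /\
   (forall W : infpath L -> Prop, open_inf W ->
      open_chi (fun g => exists x, W x /\ beta x = g)) /\
   (forall g, maximal_tail g -> exists x : infpath L, beta x = g) /\
   (forall U, open_chi U <-> open_inf (fun x : infpath L => U (beta x)))) /\
  (* (C) *)
  (forall v : vert L, open_chi (Sv v) /\ compact_chi (Sv v)).
Proof.
move=> hrf _ _.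
have hsrcZ : forall (lam : path L) (x : infpath L), Zcyl lam x -> beta x (src lam).
  move=> lam x hz; exists (deg lam).
  rewrite -{1}hz xm_src; first exact: vle_refl.
  exact: leN0.
have surj : forall g, maximal_tail g -> exists x : infpath L, beta x = g.
  move=> g hg; have [[v hv] _] := hg.
  have hs : g (src (idp v)) by rewrite src_idp.
  have [y [_ hy]] := @key _ L g (idp v) hg hs.
  by exists y.
split; first exact: beta_tail.
split.
  split; first exact: beta_cont.
  split.
    move=> W hW g hg [x [hx <-]].
    have [lam [hz hall]] := hW x hx.
    exists (src lam); split; first exact: hsrcZ.
    move=> g' hg' hv.
    have [y [hy1 hy2]] := key hg' hv.
    by exists y; split=> //; apply: hall.
  split=> // U; split; first exact: beta_cont.
  move=> hU g hg hUg.
  have [x hx] := surj g hg.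
  rewrite -hx in hUg.
  have [lam [hz hall]] := hU x hUg.
  exists (src lam); split; first by rewrite -hx; apply: hsrcZ.
  move=> g' hg' hv.
  have [y [hy1 hy2]] := key hg' hv.
  by rewrite -hy2; apply: hall.
move=> v; split; last exact: Sv_compact.
by move=> g hg [_ hgv]; exists v; split=> // g' hg' hg'v.
Qed.
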